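(* Let $G$ be a context-free grammar over $B$ with axiom $S$, reduced to the nonterminals that are productive and reachable from $S$. Then $G$ is well-formed if and only if $G$ is bounded well-formed and the word $r_S$ associated with the axiom is $\varepsilon$.
   Context: Let $A$ be a finite alphabet of opening brackets, $\bar A=\{\bar a\mid a\in A\}$ a disjoint copy of closing brackets, $B=A\cup\bar A$. The reduction $\alpha a\bar a\beta\to\alpha\beta$ ($a\in A$; $\bar a a$ does not cancel) gives each $\alpha\in B^*$ a unique normal form $\rho(\alpha)$. A word $\alpha$ is well-formed if $\rho(\alpha)\in A^*$ and weakly well-formed if $\rho(\alpha)\in\bar A^*A^*$; a language is (weakly) well-formed if all its words are; a grammar $G$ is well-formed if $L(G)$ is, and weakly well-formed if $L(G)$ is. For $\alpha\in B^*$, $\mathrm{hd}(\alpha)=|\alpha|_A-|\alpha|_{\bar A}$. For a nonterminal $X$, $L_X$ is the language generated from $X$ and $d_X=\sup\{-\mathrm{hd}(\alpha')\mid \alpha'\alpha''\in L_X\}$. $G$ is bounded well-formed if it is weakly well-formed and for every nonterminal $X$ there is a (shortest) word $r_X\in A^*$ with $|r_X|=d_X$ such that $r_XL_X$ is well-formed. *)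

(* Defs.v *)
From mathcomp Require Import all_boot all_order all_algebra.
From Stdlib Require Import Relations.
Set Implicit Arguments. Unset Strict Implicit. Unset Printing Implicit Defensive.
Import GRing.Theory Num.Theory.

Section Brackets.
Variable A : finType.

(* B = A ∪ Ā : inl a is the opening bracket a, inr a the closing bracket ā *)
Definition sym := (A + A)%type.
Definition opn (a : A) : sym := inl a.
Definition cls (a : A) : sym := inr a.
Definition is_open (s : sym) : bool := if s is inl _ then true else false.

Definition red1 (u v : seq sym) : Prop :=
  exists x y a, u = x ++ [:: opn a; cls a] ++ y /\ v = x ++ y.
Definition irreducible (u : seq sym) : Prop := forall v, ~ red1 u v.
Definition normal_form (u r : seq sym) : Prop :=
  clos_refl_trans _ red1 u r /\ irreducible r.

Definition in_Astar (w : seq sym) : bool := all is_open w.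
Definition in_AbarStar_Astar (w : seq sym) : Prop :=
  exists k, all (predC is_open) (take k w) && all is_open (drop k w).

Definition well_formed_word (w : seq sym) : Prop :=
  exists r, normal_form w r /\ in_Astar r.
Definition weakly_well_formed_word (w : seq sym) : Prop :=
  exists r, normal_form w r /\ in_AbarStar_Astar r.

Definition hd (w : seq sym) : int :=
  ((count is_open w)%:Z - (count (predC is_open) w)%:Z)%R.

Section Grammar.
Variable N : finType.

Record grammar := Grammar { rules : seq (N * seq (N + sym)) }.

Variable G : grammar.

Definition step (u v : seq (N + sym)) : Prop :=
  exists x y X rhs, (X, rhs) \in rules G /\
    u = x ++ inl X :: y /\ v = x ++ rhs ++ y.
Definition derives := clos_refl_trans _ step.

Definition lang (X : N) (w : seq sym) : Prop := derives [:: inl X] (map inr w).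

Definition productive (X : N) : Prop := exists w, lang X w.
Definition reachable (S X : N) : Prop :=
  exists x y, derives [:: inl S] (x ++ inl X :: y).

Definition wf_grammar (S : N) : Prop := forall w, lang S w -> well_formed_word w.
Definition weakly_wf_grammar (S : N) : Prop :=
  forall w, lang S w -> weakly_well_formed_word w.

(* d_X = n  (the sup is a finite natural number n) *)
Definition d_is (X : N) (n : nat) : Prop :=
  (exists u v, lang X (u ++ v) /\ (- hd u = n%:Z)%R) /\
  (forall u v, lang X (u ++ v) -> (- hd u <= n%:Z)%R).

Definition r_word (X : N) (r : seq A) : Prop :=
  (exists n, d_is X n /\ size r = n) /\
  (forall w, lang X w -> well_formed_word (map opn r ++ w)) /\
  (forall r' : seq A, (forall w, lang X w -> well_formed_word (map opn r' ++ w)) ->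
     size r <= size r').

Definition bounded_wf (S : N) : Prop :=
  weakly_wf_grammar S /\ forall X, exists r, r_word X r.

End Grammar.
End Brackets.

(* Main.v *)
Require Import Defs.
From mathcomp Require Import all_boot all_order all_algebra.
From mathcomp Require Import zify.
From Stdlib Require Import Relations Classical.
Set Implicit Arguments. Unset Strict Implicit. Unset Printing Implicit Defensive.

Lemma max_ex (P : nat -> Prop) m : (exists n, P n) -> (forall n, P n -> n <= m) ->
  exists n, P n /\ forall k, P k -> k <= n.
Proof.
elim: m => [|m IH] Hex Hb.
  case: Hex => n Pn; exists n; split => // k Pk.
  have := Hb _ Pk; have := Hb _ Pn; lia.
case: (classic (P m.+1)) => Hm.
  by exists m.+1; split => // k /Hb.
apply: IH => // n Pn.
have Hne : n <> m.+1 by move=> E; apply: Hm; rewrite -E.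
have := Hb _ Pn; lia.
Qed.

Section Aux.
Variable A : finType.
Local Notation symA := (Defs.sym A).
Implicit Types (u v w p t z r q : seq symA) (s : symA).

Definition gstep (s : symA) (t : seq symA) : seq symA :=
  match s with
  | inl a => match t with
             | inr b :: t' => if a == b then t' else s :: t
             | _ => s :: t
             end
  | inr _ => s :: t
  end.

Definition rho (w : seq symA) := foldr gstep [::] w.
Definition co (w : seq symA) := count (@is_open A) w.
Definition cc (w : seq symA) := count (predC (@is_open A)) w.

Lemma rho_cat p v : rho (p ++ v) = foldr gstep (rho v) p.
Proof. by rewrite /rho foldr_cat. Qed.

Lemma red1_rho u v : red1 u v -> rho u = rho v.
Proof.
case=> x [y [a [-> ->]]].
by rewrite !rho_cat /= eqxx.
Qed.

Lemma rt_rho u v : clos_refl_trans _ (@red1 A) u v -> rho u = rho v.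
Proof. induction 1; [exact: red1_rho | by [] | congruence]. Qed.

Lemma red1_cons s u v : red1 u v -> red1 (s :: u) (s :: v).
Proof. by case=> x [y [a [-> ->]]]; exists (s :: x), y, a. Qed.

Lemma rt_cons s u v : clos_refl_trans _ (@red1 A) u v -> clos_refl_trans _ (@red1 A) (s :: u) (s :: v).
Proof.
induction 1; [apply: rt_step; exact: red1_cons | apply: rt_refl | eapply rt_trans; eauto].
Qed.

Lemma red1_catr w u v : red1 u v -> red1 (u ++ w) (v ++ w).
Proof. by case=> x [y [a [-> ->]]]; exists x, (y ++ w), a; rewrite -!catA. Qed.

Lemma rt_catr w u v : clos_refl_trans _ (@red1 A) u v -> clos_refl_trans _ (@red1 A) (u ++ w) (v ++ w).
Proof.
induction 1; [apply: rt_step; exact: red1_catr | apply: rt_refl | eapply rt_trans; eauto].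
Qed.

Lemma rt_to_rho u : clos_refl_trans _ (@red1 A) u (rho u).
Proof.
elim: u => [|s u IH]; first exact: rt_refl.
change (clos_refl_trans _ (@red1 A) (s :: u) (gstep s (rho u))).
apply: rt_trans (rt_cons s IH) _.
rewrite /gstep; case: s => [a|b]; last exact: rt_refl.
case: (rho u) => [|[c|b] t]; try exact: rt_refl.
case: eqP => [<-|_]; last exact: rt_refl.
by apply: rt_step; exists [::], t, a.
Qed.

Lemma irr_tail s t : irreducible (s :: t) -> irreducible t.
Proof. by move=> H v Hr; apply: (H (s :: v)); exact: red1_cons. Qed.

Lemma irr_cons s t : irreducible t ->
  (forall a t', s = inl a -> t = inr a :: t' -> False) -> irreducible (s :: t).
Proof.
move=> Ht Hn v [x [y [a [E _]]]].
case: x E => [|s' x] /= [E1 E2]; first exact: Hn E1 E2.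
by apply: (Ht (x ++ y)); exists x, y, a.
Qed.

Lemma irr_rho u : irreducible (rho u).
Proof.
elim: u => [|s u IH].
  by move=> v [x [y [a [E _]]]]; case: x E.
change (irreducible (gstep s (rho u))).
rewrite /gstep; case: s => [a|b]; last by apply: irr_cons => // a' t'.
case: (rho u) IH => [|[c|b] t] IH.
- by apply: irr_cons => // a' t'.
- by apply: irr_cons => // a' t'.
- case: eqP => [_|ne]; first exact: irr_tail IH.
  apply: irr_cons => // a' t' [E1] [E2 _].
  by apply: ne; rewrite E1 E2.
Qed.

Lemma irr_fix p : irreducible p -> rho p = p.
Proof.
elim: p => [|s p IH] Hp //.
change (gstep s (rho p) = s :: p).
rewrite IH; last exact: irr_tail Hp.
case: s Hp => [a|b] Hp //=.
case: p {IH} Hp => [|[c|b] t] Hp //=.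
case: eqP => // E; subst.
exfalso; apply: (Hp t); by exists [::], t, b.
Qed.

Lemma nf_rho u r : normal_form u r -> r = rho u.
Proof. by case=> H1 H2; rewrite (rt_rho H1) irr_fix. Qed.

Lemma wf_iff u : well_formed_word u <-> in_Astar (rho u).
Proof.
split; first by case=> r [/nf_rho <-].
move=> H; exists (rho u); split => //; split; [exact: rt_to_rho | exact: irr_rho].
Qed.

Lemma cnt_rt u v : clos_refl_trans _ (@red1 A) u v -> co u + cc v = co v + cc u.
Proof.
induction 1; [|lia|lia].
case: H => x1 [y1 [a [-> ->]]]; rewrite /co /cc !count_cat /=; lia.
Qed.

Lemma cnt_rho u : co u + cc (rho u) = co (rho u) + cc u.
Proof. exact: cnt_rt (rt_to_rho u). Qed.

Lemma cc_open p : in_Astar p -> cc p = 0.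
Proof. by elim: p => [|[a|b] p IH] //= /IH. Qed.

Lemma height u : in_Astar (rho u) -> cc u <= co u.
Proof. move=> H; have := cnt_rho u; rewrite cc_open //; lia. Qed.


Lemma first_close p z : irreducible p -> ~~ in_Astar p ->
  exists o b p2 q, [/\ in_Astar o, p = o ++ inr b :: p2 & foldr gstep z p = o ++ inr b :: q].
Proof.
elim: p => [|s p IH] Hp Hn //.
case: s Hp Hn => [a|b] Hp Hn /=; last by exists [::], b, p, (foldr gstep z p).
have [o [b [p2 [q [Ho E1 E2]]]]] := IH (irr_tail Hp) Hn.
rewrite E2.
case: o Ho E1 E2 => [|s' o] Ho E1 E2 /=.
  case: eqP => [E|ne].
    subst; exfalso; apply: (Hp p2); by exists [::], p2, b.
  by exists [:: inl a], b, p2, q; rewrite E1.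
case: s' Ho E1 E2 => [c|c] //= Ho E1 E2.
by exists [:: inl a, inl c & o], b, p2, q; rewrite E1.
Qed.

Lemma prefix u v : in_Astar (rho (u ++ v)) -> in_Astar (rho u).
Proof.
move=> H; case E: (in_Astar (rho u)) => //; exfalso.
have E1 : rho (u ++ v) = rho (rho u ++ v) by apply: rt_rho; apply: rt_catr; apply: rt_to_rho.
have [o [b [p2 [q [Ho _ E2]]]]] := first_close (rho v) (irr_rho (u:=u)) (negbT E).
rewrite E1 rho_cat E2 in H.
by move: H; rewrite /in_Astar all_cat /= andbF.
Qed.

Definition prefc k z := forall i, cc (take i z) <= k + co (take i z).

Lemma lc_rho z k : prefc k z -> find (@is_open A) (rho z) <= k.
Proof.
elim: z k => [|s z IH] k H; first by [].
change (find (@is_open A) (gstep s (rho z)) <= k).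
case: s H => [a|b] H.
  have H' : prefc k.+1 z.
    move=> i; have := H i.+1; rewrite /cc /co /=; lia.
  have := IH _ H'.
  case: (rho z) => [|[c|c] t] //=.
  by case: eqP => _ /=; lia.
have Hk := H 1; move: Hk; rewrite /cc /co /= take0 /= => Hk.
have H' : prefc k.-1 z.
  move=> i; have := H i.+1; rewrite /cc /co /=; lia.
have := IH _ H'; rewrite /=; lia.
Qed.

Lemma cc_map (t : seq A) : cc (map (@opn A) t) = 0.
Proof. by elim: t. Qed.

Lemma co_map (t : seq A) : co (map (@opn A) t) = size t.
Proof. by rewrite /co; elim: t => //= a t ->. Qed.

Lemma prefc_cat k (t : seq A) z : prefc (k + size t) z -> prefc k (map (@opn A) t ++ z).
Proof.
move=> H i; rewrite take_cat size_map.
case: ifP => Hi; first by rewrite -map_take cc_map.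
have := H (i - size t); rewrite /cc /co !count_cat.
have := cc_map t; have := co_map t; rewrite /cc /co; lia.
Qed.

Lemma prefc_mono k k' z : prefc k z -> k <= k' -> prefc k' z.
Proof. by move=> H Hk i; have := H i; lia. Qed.

Lemma strip z (t : seq A) : prefc 0 z -> in_Astar (rho (map (@opn A) t ++ z)) -> in_Astar (rho z).
Proof.
move=> Hz; elim: t => [|a t IH] // H; apply: IH; move: H.
change (in_Astar (gstep (inl a) (rho (map (@opn A) t ++ z))) -> in_Astar (rho (map (@opn A) t ++ z))).
have := lc_rho (prefc_cat (prefc_mono Hz (leq0n (0 + size t)))).
by case: (rho _) => [|[c|c] w] //=.
Qed.

Lemma astar_map p : in_Astar p -> exists t : seq A, p = map (@opn A) t.
Proof.
elim: p => [|[a|b] p IH] //=; first by exists [::].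
by move/IH=> [t ->]; exists (a :: t).
Qed.

End Aux.

Section Gram.
Variables (A N : finType) (G : grammar A N).
Local Notation symA := (Defs.sym A).
Local Notation form := (seq (N + symA)).

Lemma step_ctx (p q u v : form) : step G u v -> step G (p ++ u ++ q) (p ++ v ++ q).
Proof.
case=> x [y [X [rhs [Hin [-> ->]]]]].
by exists (p ++ x), (y ++ q), X, rhs; split => //; split; rewrite -!catA.
Qed.

Lemma der_ctx (p q u v : form) : derives G u v -> derives G (p ++ u ++ q) (p ++ v ++ q).
Proof.
induction 1; [apply: rt_step; exact: step_ctx | apply: rt_refl | eapply rt_trans; eauto].
Qed.

Lemma der_term (Hp : forall X, productive G X) (x : form) :
  exists al : seq symA, derives G x (map inr al).
Proof.
elim: x => [|e x [al IH]]; first by exists [::]; apply: rt_refl.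
case: e => [X|s].
  case: (Hp X) => w Hw; exists (w ++ al); rewrite map_cat.
  apply: (@rt_trans _ _ _ (map inr w ++ x)).
    by have := der_ctx [::] x Hw.
  by have := der_ctx (map inr w) [::] IH; rewrite !cats0.
exists (s :: al).
by have := der_ctx [:: inr s] [::] IH; rewrite !cats0.
Qed.

Lemma exists_r X (al : seq symA) w0 : lang G X w0 ->
  (forall w, lang G X w -> in_Astar (rho (al ++ w))) -> exists r, r_word G X r.
Proof.
move=> Hw0 HL.
have [g Eg] : exists g, rho al = map (@opn A) g.
  by apply: astar_map; apply: (prefix (v := w0)); exact: HL.
have Hco : co al = size g + cc al.
  by have := cnt_rho al; rewrite Eg cc_map co_map; lia.
have HLg : forall w, lang G X w -> in_Astar (rho (map (@opn A) g ++ w)).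
  move=> w Hw; rewrite -Eg.
  have -> : rho (rho al ++ w) = rho (al ++ w).
    by symmetry; apply: rt_rho; apply: rt_catr; apply: rt_to_rho.
  exact: HL.
pose P n := exists u v, lang G X (u ++ v) /\ cc u = n + co u.
have Hb : forall n, P n -> n <= size g.
  move=> n [u [v [Huv E]]].
  have H := HL _ Huv; rewrite catA in H.
  move: (height (prefix H)); rewrite /cc /co in Hco E *; rewrite !count_cat; lia.
have [n [Pn Hmax]] : exists n, P n /\ forall k, P k -> k <= n.
  apply: (max_ex (m := size g)) => //.
  by exists 0, [::], w0.
have Hpre : forall u v, lang G X (u ++ v) -> cc u <= n + co u.
  move=> u v Huv; case: (leqP (co u) (cc u)) => h; last lia.
  have : P (cc u - co u) by exists u, v; split => //; lia.
  move/Hmax; lia.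
have Hng : n <= size g := Hb _ Pn.
exists (drop (size g - n) g); split; [|split].
- exists n; split; [split|].
  + case: Pn => u [v [Huv E]]; exists u, v; split => //.
    rewrite /hd; rewrite /cc /co in E; lia.
  + move=> u v Huv; have := Hpre u v Huv; rewrite /hd /cc /co; lia.
  + rewrite size_drop; lia.
- move=> w Hw; apply/wf_iff.
  apply: (strip (t := take (size g - n) g)).
    apply: prefc_cat.
    have -> : 0 + size (drop (size g - n) g) = n by rewrite size_drop; lia.
    move=> i; apply: (Hpre _ (drop i w)); by rewrite cat_take_drop.
  rewrite catA -map_cat cat_take_drop; exact: HLg.
- move=> r' Hr'; case: Pn => u [v [Huv E]].
  have := Hr' _ Huv => /wf_iff H; rewrite catA in H.
  have := height (prefix H); rewrite size_drop.
  rewrite /cc /co !count_cat in E *.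
  have := cc_map r'; have := co_map r'; rewrite /cc /co; lia.
Qed.

End Gram.

Theorem lemma2 (A N : finType) (G : grammar A N) (S : N)
  (Hreduced : forall X : N, productive G X /\ reachable G S X) :
  wf_grammar G S <-> (bounded_wf G S /\ forall r : seq A, r_word G S r -> r = [::]).
Proof.
split.
- move=> Hwf.
  have Hwf' : forall w, lang G S w -> in_Astar (rho w) by move=> w /Hwf /wf_iff.
  split; [split|].
  + move=> w /Hwf' H; exists (rho w); split; last by exists 0; rewrite take0 drop0.
    split; [exact: rt_to_rho | exact: irr_rho].
  + move=> X.
    have Hprod : forall Y, productive G Y := fun Y => (Hreduced Y).1.
    have [[w0 Hw0] [x [y Hxy]]] := Hreduced X.
    have [al Hal] := der_term Hprod x.
    have [be Hbe] := der_term Hprod y.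
    apply: (exists_r (al := al) Hw0) => w Hw.
    apply: (prefix (v := be)); rewrite -catA; apply: Hwf'.
    rewrite /lang !map_cat.
    apply: rt_trans Hxy _.
    apply: (@rt_trans _ _ _ (map inr al ++ inl X :: y)).
      by have := der_ctx [::] (inl X :: y) Hal.
    apply: (@rt_trans _ _ _ (map inr al ++ map inr w ++ y)).
      by have := der_ctx (map inr al) y Hw.
    by have := der_ctx (map inr al ++ map inr w) [::] Hbe; rewrite !cats0 -!catA.
  + move=> r [[n [[[u [v [Huv Hn]]] _] Hs]] _].
    have := height (prefix (Hwf' _ Huv)).
    move: Hn; rewrite /hd /cc /co => Hn Hh.
    by case: r Hs => //= a r Hs; exfalso; lia.
- move=> [[_ Hr] HS] w Hw.
  case: (Hr S) => r Hrw.
  have E := HS r Hrw; subst r.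
  exact: Hrw.2.1 w Hw.
Qed.
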